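(* Let $C$ be a complete structured DNNF, $g$ a var-gate or $\times$-gate of $C$, and $S\in S(g)$. Then the box of $g$ is the (unique) least common ancestor, in the tree of boxes, of the boxes containing the var-gates whose variables occur in $S$.
   Context: A set circuit $C=(G,W,\mu)$ is a finite DAG with gates $G$, wires $W\subseteq G\times G$, gate types $\mu(g)\in\{\top,\bot,\mathrm{var},\times,\cup\}$, and an injective map $S_{\mathrm{var}}$ giving each var-gate a set of variables; $C_{\mathrm{var}}$ is the union of all $S_{\mathrm{var}}(g)$. Inputs of $g$ are the $g'$ with $(g',g)\in W$; $\top,\bot,\mathrm{var}$-gates have no inputs, $\times$-gates exactly two, $\cup$-gates at least one, and $\top,\bot$-gates are never inputs of any gate. Captured sets: $S(g)=\{S_{\mathrm{var}}(g)\}$ for var-gates, $\emptyset$ for $\bot$, $\{\emptyset\}$ for $\top$, $\{S_1\cup S_2\mid S_1\in S(g_1),S_2\in S(g_2)\}$ for a $\times$-gate with inputs $g_1,g_2$, the union over inputs for $\cup$-gates. A v-tree $\mathcal{T}$ for $C$ is a binary tree whose leaves are labeled by sets of variables forming a partition of $C_{\mathrm{var}}$. A structuring function $\sigma$ from $C$ to $\mathcal{T}$ maps each var-gate $g$ to a leaf whose label contains $S_{\mathrm{var}}(g)$, ensures that for each wire $(g',g)$ either $\sigma(g')=\sigma(g)$ or $g'$ is a $\cup$-gate with $\sigma(g')$ a child of $\sigma(g)$, and that each $\times$-gate $g$ has one input mapped to the left child and one to the right child of $\sigma(g)$. A complete structured DNNF is $C$ with such $\mathcal{T}$ and $\sigma$.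 The box of a gate $g$ is $\sigma^{-1}(\sigma(g))$; the boxes $\sigma^{-1}(m)$ for nodes $m$ of $\mathcal{T}$ form a tree (the tree of boxes) isomorphic to $\mathcal{T}$. *)

(* Defs.v *)
From mathcomp Require Import all_boot.
Set Implicit Arguments. Unset Strict Implicit. Unset Printing Implicit Defensive.

Inductive gtype := GTop | GBot | GVar | GTimes | GUnion.

Record set_circuit (G X : finType) := SetCircuit {
  wire : rel G;                 (* wire g' g  <->  (g', g) \in W *)
  mu   : G -> gtype;
  svar : G -> {set X}           (* S_var, only meaningful on var-gates *)
}.

Definition inputs (G X : finType) (C : set_circuit G X) (g : G) : {set G} :=
  [set g' | wire C g' g].

Definition wf_circuit (G X : finType) (C : set_circuit G X) : Prop :=
  (forall g g', wire C g' g -> ~~ connect (wire C) g g') /\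
  (forall g, mu C g = GTop \/ mu C g = GBot \/ mu C g = GVar -> inputs C g = set0) /\
  (forall g, mu C g = GTimes -> #|inputs C g| = 2) /\
  (forall g, mu C g = GUnion -> 0 < #|inputs C g|) /\
  (forall g g', wire C g g' -> mu C g <> GTop /\ mu C g <> GBot) /\
  (forall g1 g2, mu C g1 = GVar -> mu C g2 = GVar -> svar C g1 = svar C g2 -> g1 = g2) /\
  (forall g, mu C g = GVar -> svar C g != set0).

Definition is_var_type (k : gtype) : bool := if k is GVar then true else false.

Definition Cvar (G X : finType) (C : set_circuit G X) : {set X} :=
  \bigcup_(g | is_var_type (mu C g)) svar C g.

(* captures C g S  <->  S \in S(g) *)
Inductive captures (G X : finType) (C : set_circuit G X) : G -> {set X} -> Prop :=
| cap_var g : mu C g = GVar -> captures C g (svar C g)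
| cap_top g : mu C g = GTop -> captures C g set0
| cap_times g g1 g2 S1 S2 :
    mu C g = GTimes -> wire C g1 g -> wire C g2 g -> g1 != g2 ->
    captures C g1 S1 -> captures C g2 S2 -> captures C g (S1 :|: S2)
| cap_union g g' S :
    mu C g = GUnion -> wire C g' g -> captures C g' S -> captures C g S.

(* full binary trees with leaves labelled by variable sets;
   nodes are addressed by paths (false = left child, true = right child) *)
Inductive vtree (X : finType) := VLeaf of {set X} | VNode of vtree X & vtree X.

Fixpoint subtree (X : finType) (t : vtree X) (p : seq bool) : option (vtree X) :=
  match p with
  | [::] => Some t
  | b :: p' => match t with
               | VLeaf _ => None
               | VNode l r => subtree (if b then r else l) p'
               end
  end.

Definition is_node (X : finType) (t : vtree X) (p : seq bool) : bool :=
  isSome (subtree t p).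

Definition leaf_label (X : finType) (t : vtree X) (p : seq bool) : option {set X} :=
  match subtree t p with Some (VLeaf A) => Some A | _ => None end.

Definition is_leaf (X : finType) (t : vtree X) (p : seq bool) : bool :=
  isSome (leaf_label t p).

Definition ancestor (m n : seq bool) : bool := prefix m n.

Definition vtree_for (G X : finType) (C : set_circuit G X) (t : vtree X) : Prop :=
  (forall p A, leaf_label t p = Some A -> A != set0) /\
  (forall p q A B, leaf_label t p = Some A -> leaf_label t q = Some B ->
      p <> q -> [disjoint A & B]) /\
  (forall x, x \in Cvar C <-> exists p A, leaf_label t p = Some A /\ x \in A).

Definition structuring (G X : finType) (C : set_circuit G X) (t : vtree X)
    (sigma : G -> seq bool) : Prop :=
  (forall g, is_node t (sigma g)) /\
  (forall g, mu C g = GVar ->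
     exists A, leaf_label t (sigma g) = Some A /\ svar C g \subset A) /\
  (forall g g', wire C g' g ->
     sigma g' = sigma g \/
     (mu C g' = GUnion /\ exists b, sigma g' = rcons (sigma g) b)) /\
  (forall g, mu C g = GTimes ->
     exists g1 g2, [/\ wire C g1 g, wire C g2 g,
                       sigma g1 = rcons (sigma g) false &
                       sigma g2 = rcons (sigma g) true]).

Definition is_lca (X : finType) (t : vtree X) (A : seq bool -> Prop) (m : seq bool) : Prop :=
  is_node t m /\
  (forall n, A n -> ancestor m n) /\
  (forall m', is_node t m' -> (forall n, A n -> ancestor m' n) -> ancestor m' m).

(* Main.v *)
Require Import Defs.
From mathcomp Require Import all_boot.
Set Implicit Arguments.

Lemma key_pref (m s w1 w2 : seq bool) (b1 b2 : bool) :
  prefix m w1 -> prefix (rcons s b1) w1 -> prefix m w2 -> prefix (rcons s b2) w2 ->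
  b1 != b2 -> prefix m s.
Proof.
rewrite !prefixE !size_rcons.
move=> /eqP H1 /eqP H2 /eqP H3 /eqP H4 nb.
case: (leqP (size m) (size s)) => h.
  have Hs : take (size s) w1 = s.
    by rewrite -(take_takel _ (leqnSn (size s))) H2 -cats1 take_size_cat.
  by rewrite -Hs (take_takel _ h) H1.
have E1 : rcons s b1 = take (size s).+1 m by rewrite -H1 take_takel.
have E2 : rcons s b2 = take (size s).+1 m by rewrite -H3 take_takel.
have := E1; rewrite -E2 => /rcons_inj [] E.
by rewrite E eqxx in nb.
Qed.

Lemma capt_sub (G X : finType) (C : set_circuit G X) (t : vtree X)
    (sigma : G -> seq bool) g S :
  structuring C t sigma -> captures C g S ->
  forall x, x \in S -> exists g', [/\ mu C g' = GVar, x \in svar C g' & prefix (sigma g) (sigma g')].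
Proof.
move=> [_ [_ [Hw _]]] H; elim: H.
- by move=> g0 Hg x Hx; exists g0; split => //; apply: prefix_refl.
- by move=> g0 _ x; rewrite inE.
- move=> g0 g1 g2 S1 S2 _ W1 W2 _ _ IH1 _ IH2 x; rewrite inE => /orP [] Hx.
    have [g' [A B P]] := IH1 x Hx; exists g'; split => //.
    apply: prefix_trans P; case: (Hw _ _ W1) => [->|[_ [b ->]]]; [exact: prefix_refl | exact: prefix_rcons].
  have [g' [A B P]] := IH2 x Hx; exists g'; split => //.
  apply: prefix_trans P; case: (Hw _ _ W2) => [->|[_ [b ->]]]; [exact: prefix_refl | exact: prefix_rcons].
- move=> g0 g1 S0 _ W1 _ IH1 x Hx.
  have [g' [A B P]] := IH1 x Hx; exists g'; split => //.
  apply: prefix_trans P; case: (Hw _ _ W1) => [->|[_ [b ->]]]; [exact: prefix_refl | exact: prefix_rcons].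
Qed.

Lemma capt_ne (G X : finType) (C : set_circuit G X) g S :
  wf_circuit C -> captures C g S -> mu C g <> GTop -> S != set0.
Proof.
move=> [_ [_ [_ [_ [Htb [_ Hne]]]]]] H; elim: H.
- by move=> g0 Hg _; apply: Hne.
- by [].
- move=> g0 g1 g2 S1 S2 _ W1 _ _ _ IH1 _ _ _.
  have := IH1 (proj1 (Htb _ _ W1)).
  by apply: contra => /eqP E; rewrite -subset0 -E subsetUl.
- by move=> g0 g1 S0 _ W1 _ IH1 _; apply: IH1 (proj1 (Htb _ _ W1)).
Qed.

Theorem lemma5p1 (G X : finType) (C : set_circuit G X) (t : vtree X)
    (sigma : G -> seq bool) (g : G) (S : {set X}) :
  wf_circuit C -> vtree_for C t -> structuring C t sigma ->
  (mu C g = GVar \/ mu C g = GTimes) ->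
  captures C g S ->
  is_lca t (fun m => exists g', [/\ mu C g' = GVar, svar C g' :&: S != set0 & m = sigma g'])
         (sigma g).
Proof.
move=> Hwf [_ [Hdisj _]] Hst Hg Hc.
have [Hnode [Hvar [Hw Htimes]]] := Hst.
have [_ [_ [Hcard [_ [Htb [_ Hne]]]]]] := Hwf.
split; first exact: Hnode.
split.
  move=> n [g'' [Hv'' Hne'' ->]].
  have [x] := set0Pn _ Hne''.
  rewrite inE => /andP [x1 x2].
  have [g' [Hv' Hx' P]] := capt_sub Hst Hc x2.
  have [A' [LA' sA']] := Hvar g' Hv'.
  have [A'' [LA'' sA'']] := Hvar g'' Hv''.
  case: (eqVneq (sigma g') (sigma g'')) => [<- //|neq].
  have := Hdisj _ _ _ _ LA' LA'' (fun e => ltac:(by rewrite e eqxx in neq)).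
  rewrite -setI_eq0 => /eqP D.
  have : x \in A' :&: A'' by rewrite inE (subsetP sA' _ Hx') (subsetP sA'' _ x1).
  by rewrite D inE.
move=> m' _ Hall.
case: Hg => Hg.
  case: Hc Hg Hall => [g0 Hv _ Hall | g0 -> // | g0 g1 g2 S1 S2 -> // | g0 g' S0 -> //].
  apply: Hall; exists g0; split => //.
  by rewrite setIid; apply: Hne.
case: Hc Hg Hall => [g0 -> // | g0 -> // | g0 g1 g2 S1 S2 Hg0 W1 W2 n12 c1 c2 _ Hall | g0 g' S0 -> //].
have [h1 [h2 [Wh1 Wh2 Eh1 Eh2]]] := Htimes g0 Hg0.
have /cards2P [a [b [nab Eab]]] : #|inputs C g0| == 2 by rewrite Hcard.
have [b1 [b2 [nb E1 E2]]] : exists b1 b2, [/\ b1 != b2, sigma g1 = rcons (sigma g0) b1 & sigma g2 = rcons (sigma g0) b2].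
  have : g1 \in inputs C g0 by rewrite inE.
  have : g2 \in inputs C g0 by rewrite inE.
  have : h1 \in inputs C g0 by rewrite inE.
  have : h2 \in inputs C g0 by rewrite inE.
  rewrite Eab !inE => /orP [] /eqP ? /orP [] /eqP ? /orP [] /eqP ? /orP [] /eqP ?; subst;
  try (by rewrite eqxx in n12);
  try (by exists false, true);
  try (by exists true, false);
  by rewrite Eh1 in Eh2; move/rcons_inj: Eh2 => [].
have [x1 X1] := set0Pn _ (capt_ne Hwf c1 (proj1 (Htb _ _ W1))).
have [x2 X2] := set0Pn _ (capt_ne Hwf c2 (proj1 (Htb _ _ W2))).
have [g1' [V1 Y1 P1]] := capt_sub Hst c1 X1.
have [g2' [V2 Y2 P2]] := capt_sub Hst c2 X2.
have Q1 : ancestor m' (sigma g1').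
  apply: Hall; exists g1'; split => //; apply/set0Pn; exists x1.
  by rewrite !inE Y1 X1.
have Q2 : ancestor m' (sigma g2').
  apply: Hall; exists g2'; split => //; apply/set0Pn; exists x2.
  by rewrite !inE Y2 X2 orbT.
rewrite E1 in P1; rewrite E2 in P2.
rewrite /ancestor in Q1 Q2 *. exact: (key_pref _ _ _ _ _ _ Q1 P1 Q2 P2 nb).
Qed.
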